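(* Let $\mathrm{Cir}_9$ be the graph with vertex set $\{1,\dots,9\}$ whose maximal stable sets are exactly $\{1,2,3\},\{4,5,6\},\{7,8,9\},\{1,4,7\},\{3,6,9\}$ (so two distinct vertices are non-adjacent iff they lie together in one of these sets). Then $\mathrm{Cir}_9$ is not co-weakly triangle, i.e., the complement of $\mathrm{Cir}_9$ is not weakly triangle.
   Context: A family $\mathcal S$ of maximal stable sets of $G$ is non-edge covering if every two distinct non-adjacent vertices lie in a common member. A graph $G$ is weakly triangle if there is a non-edge covering family $\mathcal S$ of maximal stable sets of $G$ such that for every $S\in\mathcal S$ and every pair of adjacent vertices $u,v\in V(G)\setminus S$, $u$ and $v$ have a common neighbor in $S$. *)

(* Defs.v *)
From mathcomp Require Import all_boot.
Set Implicit Arguments. Unset Strict Implicit. Unset Printing Implicit Defensive.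

Section Graphs.
Variable T : finType.

Definition simple_graph (e : rel T) : Prop :=
  irreflexive e /\ symmetric e.

Definition compl_graph (e : rel T) : rel T := fun x y => (x != y) && ~~ e x y.

Definition stable (e : rel T) (A : {set T}) : bool :=
  [forall x in A, forall y in A, ~~ e x y].

Definition max_stable (e : rel T) (A : {set T}) : bool := maxset (stable e) A.

Definition non_edge_covering (e : rel T) (F : {set {set T}}) : Prop :=
  (forall S, S \in F -> max_stable e S) /\
  (forall u v, u != v -> ~~ e u v -> exists2 S, S \in F & (u \in S) && (v \in S)).

Definition weakly_triangle (e : rel T) : Prop :=
  exists F : {set {set T}},
    non_edge_covering e F /\
    forall S, S \in F -> forall u v, u \notin S -> v \notin S -> e u v ->
      exists2 w, w \in S & e u w && e v w.
End Graphs.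

(* Cir_9 on vertices 'I_9, where vertex k (0-based) stands for k+1.
   Its maximal stable sets: {1,2,3},{4,5,6},{7,8,9},{1,4,7},{3,6,9}. *)
Definition cir9_blocks : seq (seq nat) :=
  [:: [:: 1; 2; 3]; [:: 4; 5; 6]; [:: 7; 8; 9]; [:: 1; 4; 7]; [:: 3; 6; 9]].

Definition cir9 : rel 'I_9 := fun x y =>
  (x != y) && ~~ has (fun b => (x.+1 \in b) && (y.+1 \in b)) cir9_blocks.

(* Main.v *)
Require Import Defs.
From mathcomp Require Import all_boot.

Definition o (k : nat) (H : k < 9) : 'I_9 := Ordinal H.

Lemma key0 : [forall w : 'I_9, compl_graph cir9 ((@o 0 erefl)) w &&
   compl_graph cir9 ((@o 3 erefl)) w ==> (w == (@o 6 erefl))].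
Proof. by apply/forallP; case=> [[|[|[|[|[|[|[|[|[|?]]]]]]]]] ?]. Qed.

Lemma key1 : [forall w : 'I_9, compl_graph cir9 ((@o 2 erefl)) w &&
   compl_graph cir9 ((@o 5 erefl)) w ==> (w == (@o 8 erefl))].
Proof. by apply/forallP; case=> [[|[|[|[|[|[|[|[|[|?]]]]]]]]] ?]. Qed.

Theorem proposition43 : ~ weakly_triangle (compl_graph cir9).
Proof.
move=> [F [[mx cov] tri]].
set G := compl_graph cir9.
have [S SF /andP[h1 h4]] := cov ((@o 1 erefl)) ((@o 4 erefl)) erefl erefl.
have st : stable G S by apply: (maxsetp (mx S SF)).
have nS : forall x y, x \in S -> y \in S -> ~~ G x y.
  move=> x y xS yS.
  by move/forallP: st => /(_ x); rewrite xS /= => /forallP /(_ y); rewrite yS.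
case: (boolP ((@o 6 erefl) \in S)) => h6.
- have h8 : (@o 8 erefl) \notin S.
    by apply/negP => h8; move: (nS _ _ h6 h8).
  have h2 : (@o 2 erefl) \notin S.
    by apply/negP => h2; move: (nS _ _ h2 h1).
  have h5 : (@o 5 erefl) \notin S.
    by apply/negP => h5; move: (nS _ _ h5 h4).
  have [w wS /andP[a b]] := tri S SF _ _ h2 h5 erefl.
  move/forallP: key1 => /(_ w); rewrite a b /= => /eqP ew.
  by move: wS; rewrite ew (negbTE h8).
- have h0 : (@o 0 erefl) \notin S.
    by apply/negP => h0; move: (nS _ _ h0 h1).
  have h3 : (@o 3 erefl) \notin S.
    by apply/negP => h3; move: (nS _ _ h3 h4).
  have [w wS /andP[a b]] := tri S SF _ _ h0 h3 erefl.
  move/forallP: key0 => /(_ w); rewrite a b /= => /eqP ew.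
  by move: wS; rewrite ew (negbTE h6).
Qed.
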